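(* Let $K$ be a field finitely generated over ${\mathbb F}_p$, let $h_1,\dots,h_m\in K$ be such that $K=K^{\langle p\rangle}h_1\oplus\cdots\oplus K^{\langle p\rangle}h_m$, and define $\pi_1,\dots,\pi_m:K\to K$ by $f=\sum_{i=1}^m\pi_i(f)^ph_i$ for all $f\in K$. If $V\subseteq K$ is a finite-dimensional ${\mathbb F}_p$-subspace, then there exists a finite-dimensional ${\mathbb F}_p$-subspace $W\subseteq K$ containing $V$ such that $\pi_i(VW)\subseteq W$ for all $i=1,\dots,m$.
   Context: $K^{\langle p\rangle}=\{f^p\mid f\in K\}$ is the subfield of $p$-th powers; the extension $K/K^{\langle p\rangle}$ is finite. For ${\mathbb F}_p$-subspaces $V,W\subseteq K$, $VW$ denotes the ${\mathbb F}_p$-span of all products $vw$ with $v\in V$, $w\in W$. *)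

(* Defs.v *)
From HB Require Import structures.
From mathcomp Require Import all_boot all_order all_algebra.
Set Implicit Arguments. Unset Strict Implicit. Unset Printing Implicit Defensive.
Import GRing.Theory.
Local Open Scope ring_scope.

Section FpSpans.
Variables (p : nat) (K : fieldType).

(* x is an F_p-linear combination of the (finitely many) vectors in s;
   the F_p-scalar c acts on K through its natural representative
   (val c)%:R, which is the F_p-action when K has characteristic p. *)
Definition Fpcomb (s : seq K) (x : K) : Prop :=
  exists c : 'I_(size s) -> 'F_p,
    x = \sum_(i < size s) ((c i : nat)%:R * s`_i).

Definition Fpspan (S : K -> Prop) (x : K) : Prop :=
  exists s : seq K, (forall y, y \in s -> S y) /\ Fpcomb s x.

Definition fd_Fp_subspace (V : K -> Prop) : Prop :=
  exists s : seq K, forall x, V x <-> Fpcomb s x.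

Definition prod_space (V W : K -> Prop) : K -> Prop :=
  Fpspan (fun x => exists v w, V v /\ W w /\ x = v * w).

End FpSpans.

Definition subfield_closed (K : fieldType) (S : K -> Prop) : Prop :=
  [/\ S 0, S 1,
      (forall x y, S x -> S y -> S (x - y)),
      (forall x y, S x -> S y -> S (x * y)) &
      (forall x, S x -> S x^-1)].

Definition finitely_generated_field (K : fieldType) : Prop :=
  exists s : seq K, forall S : K -> Prop,
    (forall x, x \in s -> S x) -> subfield_closed S -> forall x, S x.

(* Main.v *)
Require Import Defs.
From mathcomp Require Import all_boot all_order all_algebra.
From mathcomp Require Import zify ring.
Import GRing.Theory.
Local Open Scope ring_scope.

Section Spans.
Variables (p : nat) (K : fieldType).
Hypothesis hp : prime p.
Hypothesis hchar : p \in [pchar K].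

Definition ncomb (s : seq K) (x : K) : Prop :=
  exists c : 'I_(size s) -> nat, x = \sum_(i < size s) s`_i *+ c i.

Lemma Fpcomb_ncomb s x : Fpcomb p s x <-> ncomb s x.
Proof.
split=> [[c ->]|[c ->]].
  by exists (fun i => (c i : nat)); apply: eq_bigr => i _; rewrite mulr_natl.
exists (fun i => inZp (c i)); apply: eq_bigr => i _.
by rewrite mulr_natl /= Fp_cast // -mulr_natl GRing.natr_mod_pchar // mulr_natl.
Qed.

Lemma ncomb0 s : ncomb s 0.
Proof. by exists (fun _ => 0%N); rewrite big1. Qed.

Lemma ncombD s x y : ncomb s x -> ncomb s y -> ncomb s (x + y).
Proof.
move=> [c ->] [d ->]; exists (fun i => c i + d i)%N.
by rewrite -big_split; apply: eq_bigr => i _; rewrite mulrnDr.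
Qed.

Lemma ncomb_mem s y : y \in s -> ncomb s y.
Proof.
move=> ys; have ys' : (index y s < size s)%N by rewrite index_mem.
pose j := Ordinal ys'.
exists (fun i => (i == j) : nat).
rewrite (bigD1 j) //= big1 => [|i /negbTE -> //].
by rewrite eqxx nth_index // addr0.
Qed.

Lemma ncomb_ind (P : K -> Prop) s x :
  P 0 -> (forall a b, P a -> P b -> P (a + b)) ->
  (forall y, y \in s -> P y) -> ncomb s x -> P x.
Proof.
move=> P0 PD Ps [c ->]; apply: (big_ind P) => // i _.
have : P s`_i by apply: Ps; rewrite mem_nth.
elim: (c i) => [|k IH] Pi; first by rewrite mulr0n.
by rewrite mulrS; apply: PD => //; apply: IH.
Qed.

Lemma ncomb_trans s t x : (forall y, y \in s -> ncomb t y) -> ncomb s x -> ncomb t x.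
Proof. move=> H; apply: ncomb_ind => //; [exact: ncomb0 | exact: ncombD]. Qed.

End Spans.
Arguments ncomb {K}.
Arguments Fpcomb_ncomb {p K} hp hchar {s x}.
Arguments ncomb_ind {K}.
Arguments ncomb0 {K}.
Arguments ncombD {K}.
Arguments ncomb_mem {K}.
Arguments ncomb_trans {K}.


Section Pi.
Variables (p : nat) (K : fieldType).
Hypothesis hp : prime p.
Hypothesis hchar : p \in [pchar K].
Variables (m : nat) (h : 'I_m -> K) (pi : 'I_m -> K -> K).
Hypothesis hindep : forall g : 'I_m -> K,
      \sum_(i < m) (g i) ^+ p * h i = 0 -> forall i, g i = 0.
Hypothesis hpi : forall f : K, f = \sum_(i < m) (pi i f) ^+ p * h i.

Lemma frobB (a b : K) : (a - b) ^+ p = a ^+ p - b ^+ p.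
Proof. by have := pFrobenius_autB_comm hchar (mulrC a b); rewrite !pFrobenius_autE. Qed.

Lemma frobD (a b : K) : (a + b) ^+ p = a ^+ p + b ^+ p.
Proof. by have := pFrobenius_autD_comm hchar (mulrC a b); rewrite !pFrobenius_autE. Qed.

Lemma pi_unique (g : 'I_m -> K) x : x = \sum_(i < m) (g i) ^+ p * h i ->
  forall i, pi i x = g i.
Proof.
move=> hx i; apply/eqP; rewrite eq_sym -subr_eq0; apply/eqP; move: i.
apply: hindep; under eq_bigr => i _ do rewrite frobB mulrBl.
by rewrite sumrB -hx -hpi subrr.
Qed.

Lemma piD i x y : pi i (x + y) = pi i x + pi i y.
Proof.
apply: (pi_unique (fun i => pi i x + pi i y)).
under eq_bigr => j _ do rewrite frobD mulrDl.
by rewrite big_split -!hpi.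
Qed.

Lemma pi0 i : pi i 0 = 0.
Proof.
apply: (pi_unique (fun _ => 0)); rewrite big1 // => j _.
by rewrite expr0n eqn0Ngt prime_gt0 // mul0r.
Qed.

Lemma piMn i x k : pi i (x *+ k) = pi i x *+ k.
Proof. by elim: k => [|k IH]; rewrite ?pi0 // !mulrS piD IH. Qed.

Lemma piZ i a x : pi i (a ^+ p * x) = a * pi i x.
Proof.
apply: (pi_unique (fun i => a * pi i x)).
under eq_bigr => j _ do rewrite exprMn -mulrA.
by rewrite -mulr_sumr -hpi.
Qed.

End Pi.
Arguments pi_unique {p K} hchar {m h pi} hindep hpi.
Arguments piD {p K} hchar {m h pi} hindep hpi.
Arguments pi0 {p K} hp hchar {m h pi} hindep hpi.
Arguments piMn {p K} hp hchar {m h pi} hindep hpi.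
Arguments piZ {p K} hchar {m h pi} hindep hpi.


Section Mono.
Variables (p : nat) (K : fieldType).
Hypothesis hp : prime p.
Hypothesis hchar : p \in [pchar K].
Variable Z : seq K.

Definition mono (a : nat -> nat) : K := \prod_(0 <= j < size Z) Z`_j ^+ a j.
Definition expo {n N} (f : {ffun 'I_n -> 'I_N.+1}) : nat -> nat :=
  fun j => match (insub j : option 'I_n) with Some k => val (f k) | None => 0%N end.
Definition mlist N := [seq mono (expo f) | f <- enum {ffun 'I_(size Z) -> 'I_N.+1}].
Definition box N x := ncomb (mlist N) x.

Lemma mono_ext a b : (forall j, (j < size Z)%N -> a j = b j) -> mono a = mono b.
Proof. by move=> H; apply: eq_big_nat => j /andP[_ hj]; rewrite H. Qed.

Lemma mono_expo N a : (forall j, (j < size Z)%N -> (a j <= N)%N) ->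
  exists f : {ffun 'I_(size Z) -> 'I_N.+1}, mono a = mono (expo f).
Proof.
move=> H; exists [ffun k : 'I_(size Z) => inord (a k)].
apply: mono_ext => j hj; rewrite /expo; case: insubP => [k _ <-|].
  by rewrite ffunE /= inordK // ltnS H.
by rewrite hj.
Qed.

Lemma box_mono N a : (forall j, (j < size Z)%N -> (a j <= N)%N) -> box N (mono a).
Proof.
move=> H; pose f : {ffun 'I_(size Z) -> 'I_N.+1} := [ffun k : 'I_(size Z) => inord (a k)].
have -> : mono a = mono (expo f).
  apply: mono_ext => j hj; rewrite /expo; case: insubP => [k _ <-|].
    by rewrite /f ffunE /= inordK // ltnS H.
  by rewrite hj.
by apply: ncomb_mem; apply: map_f; rewrite mem_enum.
Qed.

Lemma box_ind (P : K -> Prop) N x :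
  P 0 -> (forall a b, P a -> P b -> P (a + b)) ->
  (forall a, (forall j, (a j <= N)%N) -> P (mono a)) -> box N x -> P x.
Proof.
move=> P0 PD Pm; apply: ncomb_ind => // y /mapP[f _ ->]; apply: Pm => j.
rewrite /expo; case: insubP => [k _ _|_ //]; by rewrite -ltnS ltn_ord.
Qed.

Lemma box0 N : box N 0.
Proof. exact: ncomb0. Qed.

Lemma boxD N x y : box N x -> box N y -> box N (x + y).
Proof. exact: ncombD. Qed.

Lemma boxMn N x k : box N x -> box N (x *+ k).
Proof. by move=> hx; elim: k => [|k IH]; [rewrite mulr0n; exact: box0 | rewrite mulrS; exact: boxD]. Qed.

Lemma box_le A B x : (A <= B)%N -> box A x -> box B x.
Proof.
move=> AB; apply: (box_ind (box B)); [exact: box0 | exact: boxD | ].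
move=> a Ha; apply: box_mono => j _; exact: leq_trans (Ha j) AB.
Qed.

Lemma monoD a b : mono (fun j => a j + b j)%N = mono a * mono b.
Proof. by rewrite -big_split; apply: eq_bigr => j _; rewrite exprD. Qed.

Lemma boxM A B x y : box A x -> box B y -> box (A + B) (x * y).
Proof.
move=> bx by_; apply: (box_ind (fun x => box (A + B) (x * y))) bx.
- rewrite mul0r; exact: box0.
- by move=> u v hu hv; rewrite mulrDl; apply: boxD.
move=> a Ha; apply: (box_ind (fun y => box (A + B) (mono a * y))) by_.
- rewrite mulr0; exact: box0.
- by move=> u v hu hv; rewrite mulrDr; apply: boxD.
move=> b Hb; rewrite -monoD; apply: box_mono => j _; exact: leq_add.
Qed.

Lemma box1 : box 0 1.
Proof.
have -> : (1 : K) = mono (fun _ => 0%N) by rewrite /mono big1 // => j _; rewrite expr0.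
by apply: box_mono.
Qed.

Lemma box_nth j : (j < size Z)%N -> box 1 Z`_j.
Proof.
move=> hj; have -> : Z`_j = mono (fun k => (k == j) : nat).
  rewrite /mono big_mkord (bigD1 (Ordinal hj)) //= eqxx expr1 big1 ?mulr1 // => k hk.
  have -> : (nat_of_ord k == j) = false by apply: negbTE.
  by rewrite expr0.
by apply: box_mono => k _; case: (k == j).
Qed.

Lemma box_opp N x : box N x -> box N (- x).
Proof.
have hp0 : (p%:R : K) = 0 by apply/eqP; rewrite -(dvdn_pcharf hchar).
move=> bx; have -> : - x = x *+ p.-1.
  apply/eqP; rewrite eq_sym -subr_eq0 opprK -mulrSr prednK ?prime_gt0 //.
  by rewrite -mulr_natr hp0 mulr0.
exact: boxMn.
Qed.

Definition R x := exists N, box N x.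

Lemma R_list (l : seq K) : (forall x, x \in l -> R x) -> exists N, forall x, x \in l -> box N x.
Proof.
elim: l => [|y l IH] H; first by exists 0%N.
have [N1 H1] := H y (mem_head _ _).
have [N2 H2] : exists N, forall x, x \in l -> box N x.
  by apply: IH => x xl; apply: H; rewrite in_cons xl orbT.
exists (maxn N1 N2) => x; rewrite in_cons => /orP[/eqP ->|xl].
  by apply: box_le (H1); rewrite leq_maxl.
by apply: box_le (H2 _ xl); rewrite leq_maxr.
Qed.

Lemma R0 : R 0. Proof. by exists 0%N; apply: box0. Qed.
Lemma R1 : R 1. Proof. by exists 0%N; apply: box1. Qed.
Lemma RD x y : R x -> R y -> R (x + y).
Proof.
move=> [A ha] [B hb]; exists (maxn A B).
by apply: boxD; [apply: box_le ha; rewrite leq_maxl | apply: box_le hb; rewrite leq_maxr].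
Qed.
Lemma RM x y : R x -> R y -> R (x * y).
Proof. by move=> [A ha] [B hb]; exists (A + B)%N; apply: boxM. Qed.
Lemma RN x : R x -> R (- x).
Proof. by move=> [A ha]; exists A; apply: box_opp. Qed.
Lemma RB x y : R x -> R y -> R (x - y).
Proof. by move=> hx hy; apply: RD => //; apply: RN. Qed.
Lemma R_nth j : (j < size Z)%N -> R Z`_j.
Proof. by move=> hj; exists 1%N; apply: box_nth. Qed.
Lemma R_mem y : y \in Z -> R y.
Proof. by move=> yZ; rewrite -(nth_index 0 yZ); apply: R_nth; rewrite index_mem. Qed.

End Mono.
Arguments mono {K}.
Arguments box {K}.
Arguments R {K}.
Arguments mlist {K}.
Arguments expo {n N}.


Section Degree.
Variables (p : nat) (K : fieldType).
Hypothesis hp : prime p.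
Hypothesis hchar : p \in [pchar K].
Variables (m : nat) (h : 'I_m -> K) (pi : 'I_m -> K -> K).
Hypothesis hindep : forall g : 'I_m -> K,
      \sum_(i < m) (g i) ^+ p * h i = 0 -> forall i, g i = 0.
Hypothesis hpi : forall f : K, f = \sum_(i < m) (pi i f) ^+ p * h i.
Variable Z : seq K.
Hypothesis hclosed : forall i x, R Z x -> R Z (pi i x).

Lemma mono_split a : mono Z a =
  (mono Z (fun j => a j %/ p)%N) ^+ p * mono Z (fun j => a j %% p)%N.
Proof.
rewrite /mono -prodrXl -big_split; apply: eq_bigr => j _.
by rewrite -exprM /= -exprD -divn_eq.
Qed.

Lemma boundC : exists C, forall i a, (forall j, (a j < p)%N) -> box Z C (pi i (mono Z a)).
Proof.
pose l := [seq pi x.1 (mono Z (expo x.2)) | x <- enum (@predT ('I_m * {ffun 'I_(size Z) -> 'I_p.-1.+1})%type)].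
have [C HC] : exists N, forall x, x \in l -> box Z N x.
  apply: R_list => _ /mapP[x _ ->]; apply: hclosed; exists p.-1; apply: box_mono => j _.
  rewrite /expo; case: insubP => [k _ _|_ //]; by rewrite -ltnS ltn_ord.
exists C => i a Ha.
have [f ->] : exists f : {ffun 'I_(size Z) -> 'I_p.-1.+1}, mono Z a = mono Z (expo f).
  by apply: mono_expo => j _; rewrite -ltnS prednK ?prime_gt0 ?Ha.
apply: HC; apply/mapP; exists (i, f) => //; by rewrite mem_enum.
Qed.

Lemma pi_box : exists C, forall M i x, box Z M x -> box Z (M %/ p + C) (pi i x).
Proof.
have [C HC] := boundC; exists C => M i x.
apply: (@box_ind K Z (fun x => box Z (M %/ p + C) (pi i x))).
- by rewrite (pi0 hp hchar hindep hpi); apply: box0.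
- by move=> u v hu hv; rewrite (piD hchar hindep hpi); apply: boxD.
move=> a Ha; rewrite mono_split (piZ hchar hindep hpi); apply: boxM.
  by apply: box_mono => j _; apply: leq_div2r.
by apply: HC => j; rewrite ltn_mod prime_gt0.
Qed.

End Degree.
Arguments pi_box {p K} hp hchar {m h pi} hindep hpi {Z} hclosed.


Section Assemble.
Variables (p : nat) (K : fieldType).
Hypothesis hp : prime p.
Hypothesis hchar : p \in [pchar K].
Variables (m : nat) (h : 'I_m -> K) (pi : 'I_m -> K -> K).
Hypothesis hindep : forall g : 'I_m -> K,
      \sum_(i < m) (g i) ^+ p * h i = 0 -> forall i, g i = 0.
Hypothesis hpi : forall f : K, f = \sum_(i < m) (pi i f) ^+ p * h i.

Lemma box_memZ (Z : seq K) y : y \in Z -> box Z 1 y.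
Proof. by move=> yZ; rewrite -(nth_index 0 yZ); apply: box_nth; rewrite index_mem. Qed.

Lemma assemble (V : K -> Prop) (sV : seq K) (hV : forall x, V x <-> Fpcomb p sV x)
  (Z : seq K) (sub : forall y, y \in sV -> y \in Z)
  (hclosed : forall i x, R Z x -> R Z (pi i x)) :
  exists W : K -> Prop,
    [/\ fd_Fp_subspace p W,
        (forall x, V x -> W x) &
        (forall (i : 'I_m) (x : K), prod_space p V W x -> W (pi i x))].
Proof.
have [C HC] := pi_box hp hchar hindep hpi hclosed.
pose N := (C.*2.+1)%N.
have V1 : forall x, V x -> box Z 1 x.
  move=> x /hV /(Fpcomb_ncomb hp hchar).
  apply: (ncomb_ind (box Z 1)); [exact: box0 | exact: boxD |].
  by move=> y /sub; apply: box_memZ.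
exists (Fpcomb p (mlist Z N)); split.
- by exists (mlist Z N).
- move=> x /V1 hx; apply/(Fpcomb_ncomb hp hchar); apply: box_le hx; rewrite /N; lia.
move=> i x [s [Hs /(Fpcomb_ncomb hp hchar) hx]].
apply/(Fpcomb_ncomb hp hchar).
apply: (ncomb_ind (fun x => box Z N (pi i x))) hx.
- by rewrite (pi0 hp hchar hindep hpi); apply: box0.
- by move=> u v hu hv; rewrite (piD hchar hindep hpi); apply: boxD.
move=> y /Hs [v [w [hv [/(Fpcomb_ncomb hp hchar) hw ->]]]].
have := HC _ i _ (@boxM _ _ _ _ _ _ (V1 _ hv) hw); apply: box_le.
have h2 : ((1 + N) %/ p <= (1 + N) %/ 2)%N by apply: leq_div2l => //; apply: prime_gt1.
have h3 : ((1 + N) %/ 2 = C.+1)%N by rewrite /N -[(1 + C.*2.+1)%N]/((C.+1).*2) -mul2n mulKn.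
rewrite h3 in h2; move: h2; rewrite /N; lia.
Qed.

End Assemble.


Section Construct.
Variables (p : nat) (K : fieldType).
Hypothesis hp : prime p.
Hypothesis hchar : p \in [pchar K].
Variables (m : nat) (h : 'I_m -> K) (pi : 'I_m -> K -> K).
Hypothesis hindep : forall g : 'I_m -> K,
      \sum_(i < m) (g i) ^+ p * h i = 0 -> forall i, g i = 0.
Hypothesis hpi : forall f : K, f = \sum_(i < m) (pi i f) ^+ p * h i.

Lemma RX (Z : seq K) x k : R Z x -> R Z (x ^+ k).
Proof. by move=> hx; elim: k => [|k IH]; [rewrite expr0; apply: R1 | rewrite exprS; apply: RM]. Qed.

Definition frac (Y : seq K) x := exists a b, [/\ R Y a, R Y b, b != 0 & x = a / b].

Lemma frac_all (Y : seq K) (sg : seq K) : (forall y, y \in sg -> y \in Y) ->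
  (forall S : K -> Prop, (forall x, x \in sg -> S x) -> subfield_closed S -> forall x, S x) ->
  forall x, frac Y x.
Proof.
move=> sub hfg; apply: hfg.
  move=> x /sub xY; exists x, 1; split; [exact: R_mem | exact: R1 | exact: oner_neq0 | by rewrite divr1].
have RN' := @RN p K hp hchar Y.
split.
- by exists 0, 1; split; [exact: R0 | exact: R1 | exact: oner_neq0 | rewrite divr1].
- by exists 1, 1; split; [exact: R1 | exact: R1 | exact: oner_neq0 | rewrite divr1].
- move=> x y [a [b [ha hb b0 ->]]] [c [d [hc hd d0 ->]]].
  exists (a * d - c * b), (b * d); split.
  + by apply: RD; [apply: RM | apply: RN'; apply: RM].
  + exact: RM.
  + by rewrite mulf_neq0.
  + by field; apply/andP.
- move=> x y [a [b [ha hb b0 ->]]] [c [d [hc hd d0 ->]]].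
  exists (a * c), (b * d); split; [exact: RM | exact: RM | by rewrite mulf_neq0 |].
  by field; apply/andP.
- move=> x [a [b [ha hb b0 ->]]].
  have [->|a0] := eqVneq a 0.
    by exists 0, 1; split; [exact: R0 | exact: R1 | exact: oner_neq0 | rewrite !mul0r invr0].
  by exists b, a; split => //; rewrite invf_div.
Qed.

Lemma common_den (Y : seq K) (l : seq K) : (forall x, x \in l -> frac Y x) ->
  exists s0, [/\ R Y s0, s0 != 0 & forall x, x \in l -> R Y (x * s0)].
Proof.
elim: l => [|y l IH] H.
  by exists 1; split; [exact: R1 | exact: oner_neq0 | ].
have [s1 [hs1 s10 Hl]] : exists s0, [/\ R Y s0, s0 != 0 & forall x, x \in l -> R Y (x * s0)].
  by apply: IH => x xl; apply: H; rewrite in_cons xl orbT.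
have [a [b [ha hb b0 ->]]] := H y (mem_head _ _).
exists (s1 * b); split; [exact: RM | by rewrite mulf_neq0 | ].
move=> x; rewrite in_cons => /orP[/eqP ->|xl].
  by rewrite mulrCA mulfVK //; apply: RM.
by rewrite mulrA; apply: RM => //; apply: Hl.
Qed.

Lemma mono_rcons (Y : seq K) t a :
  mono (rcons Y t) a = mono Y a * t ^+ a (size Y).
Proof.
rewrite /mono size_rcons big_nat_recr //= nth_rcons ltnn eqxx; congr (_ * _).
by apply: eq_big_nat => j /andP[_ hj]; rewrite nth_rcons hj.
Qed.

Lemma RY_RZ (Y : seq K) t x : R Y x -> R (rcons Y t) x.
Proof.
move=> [N hx]; exists N; move: hx.
apply: (@box_ind K Y (box (rcons Y t) N)); [exact: box0 | exact: boxD |].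
move=> a Ha.
have -> : mono Y a = mono (rcons Y t) (fun j => if (j < size Y)%N then a j else 0%N).
  rewrite mono_rcons ltnn expr0 mulr1; apply: mono_ext => j hj; by rewrite hj.
by apply: box_mono => j _; case: ifP.
Qed.

Lemma construct (Y : seq K) (s0 : K) :
  R Y s0 -> s0 != 0 ->
  (forall i a, (forall j, (a j < p)%N) -> R Y (pi i (mono Y a) * s0)) ->
  forall i x, R (rcons Y s0^-1) x -> R (rcons Y s0^-1) (pi i x).
Proof.
move=> Rs0 s00 Hden.
set Z := rcons Y s0^-1; set t := s0^-1.
have Rt : R Z t by apply: R_mem; rewrite mem_rcons mem_head.
have piY : forall i r, R Y r -> R Z (pi i r).
  move=> i r [N hr]; move: hr.
  apply: (@box_ind K Y (fun r => R Z (pi i r))).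
  - by rewrite (pi0 hp hchar hindep hpi); apply: R0.
  - by move=> u v hu hv; rewrite (piD hchar hindep hpi); apply: RD.
  move=> a Ha; rewrite (mono_split p) (piZ hchar hindep hpi).
  apply: RM; first by apply: RY_RZ; exists N; apply: box_mono => j _; apply: leq_trans (leq_div _ _) (Ha j).
  rewrite -[pi i _](mulfK s00); apply: RM => //; apply: RY_RZ; apply: Hden => j.
  by rewrite ltn_mod prime_gt0.
have den : forall x, R Z x -> exists E, R Y (x * s0 ^+ E).
  move=> x [N hx]; move: hx.
  apply: (@box_ind K Z (fun x => exists E, R Y (x * s0 ^+ E))).
  - by exists 0%N; rewrite mul0r; apply: R0.
  - move=> u v [E1 h1] [E2 h2]; exists (E1 + E2)%N.
    rewrite mulrDl exprD mulrA; apply: RD; first by apply: RM => //; apply: RX.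
    by rewrite (mulrC (s0 ^+ E1)) mulrA; apply: RM => //; apply: RX.
  move=> a Ha; exists (a (size Y)); rewrite /Z mono_rcons -mulrA -exprMn /t mulVf // expr1n mulr1.
  by exists N; apply: box_mono => j _.
move=> i x /den [E hE].
have hE' : R Y (x * s0 ^+ (E * p)).
  have Ep : (E <= E * p)%N by rewrite leq_pmulr ?prime_gt0.
  by rewrite -(subnKC Ep) exprD mulrA; apply: RM => //; apply: RX.
have -> : x = (t ^+ E) ^+ p * (x * s0 ^+ (E * p)).
  by rewrite mulrCA -exprM -exprMn /t mulVf // expr1n mulr1.
by rewrite (piZ hchar hindep hpi); apply: RM; [apply: RX | apply: piY].
Qed.

End Construct.


Theorem proposition5p2 (p : nat) (K : fieldType)
  (hp : prime p) (hchar : p \in [pchar K])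
  (hfg : finitely_generated_field K)
  (m : nat) (h : 'I_m -> K)
  (hspan : forall f : K, exists g : 'I_m -> K, f = \sum_(i < m) (g i) ^+ p * h i)
  (hindep : forall g : 'I_m -> K,
      \sum_(i < m) (g i) ^+ p * h i = 0 -> forall i, g i = 0)
  (pi : 'I_m -> K -> K)
  (hpi : forall f : K, f = \sum_(i < m) (pi i f) ^+ p * h i)
  (V : K -> Prop) (hV : fd_Fp_subspace p V) :
  exists W : K -> Prop,
    [/\ fd_Fp_subspace p W,
        (forall x, V x -> W x) &
        (forall (i : 'I_m) (x : K), prod_space p V W x -> W (pi i x))].
Proof.
have [sV HsV] := hV; have [sg Hsg] := hfg.
pose Y := sV ++ sg.
pose l := [seq pi x.1 (mono Y (expo x.2)) |
            x <- enum (@predT ('I_m * {ffun 'I_(size Y) -> 'I_p.-1.+1})%type)].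
have hfrac : forall x, @frac K Y x.
  apply: (@frac_all p K hp hchar Y sg) => // y ysg.
  by rewrite mem_cat ysg orbT.
have [s0 [Rs0 s00 Hl]] := @common_den K Y l (fun x _ => hfrac x).
have Hden : forall i a, (forall j, (a j < p)%N) -> R Y (pi i (mono Y a) * s0).
  move=> i a Ha.
  have [f ->] : exists f : {ffun 'I_(size Y) -> 'I_p.-1.+1}, mono Y a = mono Y (expo f).
    by apply: mono_expo => j _; rewrite -ltnS prednK ?prime_gt0 ?Ha.
  apply: Hl; apply/mapP; exists (i, f) => //; by rewrite mem_enum.
apply: (@assemble p K hp hchar m h pi hindep hpi V sV HsV (rcons Y s0^-1)).
  by move=> y ysV; rewrite mem_rcons in_cons mem_cat ysV orbT.
exact: (@construct p K hp hchar m h pi hindep hpi Y s0 Rs0 s00 Hden).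
Qed.
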